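(* Let $L$ be an oriented, ordered virtual link diagram with affine bilabeling $C$. Let $L_i$ be a component of weight $n$ whose starting point $s$ carries bilabel $(a_1,a_2)$. Let $c$ be the first classical crossing met by $L_i$ after $s$ (in the direction of orientation), and suppose $c$ is an external crossing. Let $\iota\in\{\pm1\}$ be the index change of $L_i$'s passage through $c$. Let $C'$ be the bilabeling obtained by moving the starting point of $L_i$ forward to a point $s'$ just past $c$, still with starting bilabel $(a_1,a_2)$, and keeping everything else the same. Then: - the weight of $c$ changes by $+(n-\iota)$ if $L_i$ is the overstrand at $c$, and by $-(n-\iota)$ if $L_i$ is the understrand at $c$, i.e. $W_{C'}(c)=W_C(c)\pm(n-\iota)$; and - all other labels of $L_i$ (those not on the segment between $s$ and $s'$) shift by $-\iota$.
   Context: **Diagrams.** A virtual link diagram is an oriented planar diagram of ordered closed curves $L_1,\dots,L_n$ (components) with classical and virtual crossings. **Crossing conventions.** Draw a classical crossing with both strands oriented upward. - The bottom-left-to-top-right strand has index change $-1$; the bottom-right-to-top-left strand has index change $+1$. - The crossing is positive if the overstrand is the bottom-left-to-top-right strand, and negative otherwise. - Self-crossings have both strands on one component; external crossings have strands on different components. - The weight of a component $L_i$ is the sum of the index changes of $L_i$ over its passages through external classical crossings. **Affine bilabeling.** - Each component gets a starting point with bilabel $(a^{(i)}_1,a^{(i)}_2)$ of formal integer variables. - The bilabel is carried along the component in its orientation and is unchanged at virtual crossings. - At a classical crossing with index change $\varepsilon$, the first entry changes by $\varepsilon$ if the crossing is a self-crossing, and the second entry changes by $\varepsilon$ if external. -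 On returning to the starting point, the label is off by the component's weight in the second entry; this discrepancy is placed at the starting point. **Crossing weight.** For $|(x,y)|=x+y$ and $c$ drawn with both strands upward: - if $c$ is positive, $W(c)=|\text{bottom-left}|-|\text{top-left}|$; - if $c$ is negative, $W(c)=|\text{bottom-right}|-|\text{top-right}|$. Weights are computed with the labels as integer linear expressions in the same formal variables. *)

(* Defs.v *)
(* Combinatorial (Gauss-diagram) model of oriented, ordered
   virtual link diagrams with affine bilabelings. *)
From mathcomp Require Import all_boot all_order all_algebra.
Set Implicit Arguments. Unset Strict Implicit. Unset Printing Implicit Defensive.
Import GRing.Theory Num.Theory.
Local Open Scope ring_scope.

(* A diagram with [m] ordered components L_0..L_{m-1} and [k] classical crossings.
   A passage is a pair (c, o) : crossing c, with o = true for the overstrand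
   passage and o = false for the understrand passage.
   [gcomp D i] lists the classical-crossing passages of component L_i in order
   of orientation, starting from the starting point of L_i.
   [csign D c] = true iff c is a positive crossing.
   Virtual crossings do not affect bilabels and are not recorded. *)
Record vdiagram (m k : nat) := VDiagram {
  gcomp : 'I_m -> seq ('I_k * bool);
  csign : 'I_k -> bool }.

Definition wf_diagram m k (D : vdiagram m k) : bool :=
  perm_eq (flatten [seq gcomp D i | i <- enum 'I_m]) (enum {: 'I_k * bool}).

(* Drawn with both strands upward: the overstrand is the bottom-left-to-top-right
   strand iff the crossing is positive. *)
Definition is_BLTR m k (D : vdiagram m k) (p : 'I_k * bool) : bool :=
  p.2 == csign D p.1.

Definition index_change m k (D : vdiagram m k) (p : 'I_k * bool) : int :=
  if is_BLTR D p then -1 else 1.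

Definition self_crossing m k (D : vdiagram m k) (c : 'I_k) : bool :=
  [exists i, ((c, true) \in gcomp D i) && ((c, false) \in gcomp D i)].

Definition bilabel := (int * int)%type.

Definition delta m k (D : vdiagram m k) (p : 'I_k * bool) : bilabel :=
  if self_crossing D p.1 then (index_change D p, 0) else (0, index_change D p).

(* label of the j-th segment of L_i (segment 0 starts at the starting point,
   segment j follows the j-th passage); a i is the starting bilabel of L_i *)
Definition label_at m k (D : vdiagram m k) (a : 'I_m -> bilabel) (i : 'I_m)
  (j : nat) : bilabel :=
  ((a i).1 + \sum_(p <- take j (gcomp D i)) (delta D p).1,
   (a i).2 + \sum_(p <- take j (gcomp D i)) (delta D p).2).

Definition comp_weight m k (D : vdiagram m k) (i : 'I_m) : int :=
  \sum_(p <- gcomp D i | ~~ self_crossing D p.1) index_change D p.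

Definition comp_of m k (D : vdiagram m k) (p : 'I_k * bool) : option 'I_m :=
  [pick i | p \in gcomp D i].

Definition in_label m k (D : vdiagram m k) a (p : 'I_k * bool) : bilabel :=
  if comp_of D p is Some i then label_at D a i (index p (gcomp D i)) else (0, 0).
Definition out_label m k (D : vdiagram m k) a (p : 'I_k * bool) : bilabel :=
  if comp_of D p is Some i then label_at D a i (index p (gcomp D i)).+1 else (0, 0).

Definition bl_abs (x : bilabel) : int := x.1 + x.2.

(* corners of crossing c drawn with both strands upward *)
Definition BL m k (D : vdiagram m k) a c := in_label D a (c, csign D c).
Definition TR m k (D : vdiagram m k) a c := out_label D a (c, csign D c).
Definition BR m k (D : vdiagram m k) a c := in_label D a (c, ~~ csign D c).
Definition TL m k (D : vdiagram m k) a c := out_label D a (c, ~~ csign D c).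

Definition crossing_weight m k (D : vdiagram m k) a (c : 'I_k) : int :=
  if csign D c then bl_abs (BL D a c) - bl_abs (TL D a c)
  else bl_abs (BR D a c) - bl_abs (TR D a c).

Definition move_start m k (D : vdiagram m k) (i : 'I_m) : vdiagram m k :=
  VDiagram (fun j => if j == i then rot 1 (gcomp D j) else gcomp D j) (csign D).

(* Main.v *)
Require Import Defs.
From mathcomp Require Import all_boot all_order all_algebra.
From mathcomp Require Import zify.
Import GRing.Theory Num.Theory.
Local Open Scope ring_scope.

Section H.
Variables (m k : nat) (D : vdiagram m k).
Hypothesis wf : wf_diagram D.

Lemma cnt1 p : (\sum_(j < m) count_mem p (gcomp D j) = 1)%N.
Proof.
have := permP wf (pred1 p).
rewrite count_flatten sumnE !big_map count_uniq_mem ?enum_uniq // mem_enum /= => <-. rewrite /index_enum; by case: index_enum_key.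
Qed.

Lemma comp_uniq p j1 j2 : p \in gcomp D j1 -> p \in gcomp D j2 -> j1 = j2.
Proof.
move=> h1 h2; apply/eqP; apply/negPn/negP => ne.
have := cnt1 p; rewrite (bigD1 j1) // (bigD1 j2) /=; last by rewrite eq_sym.
move: h1 h2; rewrite -!has_pred1 !has_count. move: (count _ (gcomp D j1)) (count _ (gcomp D j2)) (\sum_(i < m | _) _)%N => x y z. clear. lia.
Qed.

Lemma gcomp_uniq j : uniq (gcomp D j).
Proof.
apply: count_mem_uniq => x.
have := cnt1 x; rewrite (bigD1 j) //=.
case: (boolP (x \in gcomp D j)) => h.
  move: h; rewrite -has_pred1 has_count; move: (count _ _) (\sum_(i < m | _) _)%N => x0 y0 /=; lia.
by move/count_memPn: h => ->.
Qed.

Lemma self_sum0 i : \sum_(p <- gcomp D i) (delta D p).1 = 0.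
Proof.
rewrite big_uniq ?gcomp_uniq // big_mkcond /=.
pose G := fun (c : 'I_k) (bb : bool) =>
  if (c, bb) \in gcomp D i then (delta D (c, bb)).1 else 0.
rewrite (eq_bigr (fun p => G p.1 p.2)); last by case.
rewrite -(pair_bigA _ G) big1 // => c' _; rewrite big_bool /G /delta /=.
case: (boolP (self_crossing D c')) => hs; last by rewrite /= !if_same addr0.
move: (hs) => /existsP [j /andP [ht hf]] /=.
case: (boolP ((c', true) \in gcomp D i)) => hti.
  have ej := comp_uniq _ _ _ hti ht; subst j; rewrite hf.
  by rewrite /index_change /is_BLTR /=; case: (csign D c'); rewrite /= ?addrN ?addNr.
have -> : (c', false) \in gcomp D i = false.
  apply/negP => hfi; have ej := comp_uniq _ _ _ hfi hf; subst j; by rewrite ht in hti.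
by rewrite addr0.
Qed.

Variable i : 'I_m.
Notation D' := (move_start D i).

Lemma mem_move j p : (p \in gcomp D' j) = (p \in gcomp D j).
Proof. by rewrite /=; case: ifP => _ //; rewrite mem_rot. Qed.

Lemma self_move c : self_crossing D' c = self_crossing D c.
Proof. by rewrite /self_crossing; apply: eq_existsb => j; rewrite !mem_move. Qed.

Lemma delta_move p : delta D' p = delta D p.
Proof. by rewrite /delta self_move. Qed.

Lemma comp_of_move p : comp_of D' p = comp_of D p.
Proof. by rewrite /comp_of; apply: eq_pick => j /=; apply: mem_move. Qed.

Lemma label_move a j x : label_at D' a j x =
  ((a j).1 + \sum_(p <- take x (gcomp D' j)) (delta D p).1,
   (a j).2 + \sum_(p <- take x (gcomp D' j)) (delta D p).2).
Proof.
by rewrite /label_at; congr pair; congr (_ + _); apply: eq_bigr => p _; rewrite delta_move.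
Qed.

End H.

Theorem lemma1 (m k : nat) (D : vdiagram m k) (a : 'I_m -> bilabel) (i : 'I_m)
  (c : 'I_k) (b : bool) (rest : seq ('I_k * bool)) (n iot : int) :
  wf_diagram D ->
  gcomp D i = (c, b) :: rest ->
  ~~ self_crossing D c ->
  comp_weight D i = n ->
  index_change D (c, b) = iot ->
  crossing_weight (move_start D i) a c
    = crossing_weight D a c + (if b then n - iot else - (n - iot)) /\
  (forall j : nat, (0 < j <= size (gcomp D i))%N ->
     label_at (move_start D i) a i j.-1
       = ((label_at D a i j).1, (label_at D a i j).2 - iot)).
Proof.
move=> wf hs nself hn hiot.
have gi : gcomp (move_start D i) i = rcons rest (c, b) by rewrite /= eqxx hs rot1_cons.
have gj j : j != i -> gcomp (move_start D i) j = gcomp D j by move=> /negbTE h; rewrite /= h.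
have dp : delta D (c, b) = (0, iot) by rewrite /delta (negbTE nself) hiot.
have P2 : forall j : nat, (0 < j <= size (gcomp D i))%N ->
     label_at (move_start D i) a i j.-1
       = ((label_at D a i j).1, (label_at D a i j).2 - iot).
  move=> [|j] //; rewrite hs /= => hj.
  rewrite label_move gi -cats1 takel_cat // /label_at hs /= big_cons dp /=.
  rewrite !big_cons dp /=; congr pair; lia.
split=> //.
have s1 := @self_sum0 _ _ D wf i.
have s2 : \sum_(p <- gcomp D i) (delta D p).2 = n.
  rewrite -hn /comp_weight [RHS]big_mkcond; apply: eq_bigr => p _.
  by rewrite /delta; case: ifP.
have cb_in : (c, b) \in gcomp D i by rewrite hs mem_head.
have nr : (c, b) \notin rest by have := @gcomp_uniq _ _ D wf i; rewrite hs /= => /andP[].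
have co : comp_of D (c, b) = Some i.
  rewrite /comp_of; case: pickP => [j hj | /(_ i) ]; last by rewrite cb_in.
  by rewrite (@comp_uniq _ _ D wf _ _ _ hj cb_in).
have co' : comp_of (move_start D i) (c, b) = Some i by rewrite comp_of_move.
have idx0 : index (c, b) (gcomp D i) = 0%N by rewrite hs /= eqxx.
have idx' : index (c, b) (gcomp (move_start D i) i) = size rest.
  by rewrite gi -cats1 index_pivot.
have HinD : bl_abs (in_label D a (c, b)) = bl_abs (a i).
  by rewrite /in_label co idx0 /label_at take0 !big_nil /bl_abs !addr0.
have HoutD : bl_abs (out_label D a (c, b)) = bl_abs (a i) + iot.
  rewrite /out_label co idx0 /label_at hs /= take0 !big_cons !big_nil dp /bl_abs /=.
  lia.
have HinD' : bl_abs (in_label (move_start D i) a (c, b)) = bl_abs (a i) + n - iot.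
  rewrite /in_label co' idx' (_ : size rest = (size (gcomp D i)).-1); last by rewrite hs.
  rewrite P2; last by rewrite hs /= leqnn.
  rewrite /label_at take_size s1 s2 /bl_abs /=.
  lia.
have HoutD' : bl_abs (out_label (move_start D i) a (c, b)) = bl_abs (a i) + n.
  rewrite /out_label co' idx' label_move.
  rewrite (_ : (size rest).+1 = size (gcomp (move_start D i) i)); last by rewrite gi size_rcons.
  have pr : perm_eq (rot 1 (gcomp D i)) (gcomp D i) by rewrite perm_rot.
  rewrite take_size /= eqxx !(perm_big _ pr) s1 s2 /bl_abs /=.
  lia.
have Hq : in_label (move_start D i) a (c, ~~ b) = in_label D a (c, ~~ b) /\
          out_label (move_start D i) a (c, ~~ b) = out_label D a (c, ~~ b).
  rewrite /in_label /out_label comp_of_move.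
  case E: (comp_of D (c, ~~ b)) => [j|] //.
  have jin : (c, ~~ b) \in gcomp D j.
    by move: E; rewrite /comp_of; case: pickP => // j' hj' [<-].
  have jne : j != i.
    apply/eqP => eji; subst j; move/negP: nself; apply; apply/existsP; exists i.
    by case: (b) cb_in jin => /= -> ->.
  by rewrite gj // !label_move /label_at gj.
case: Hq => Hq1 Hq2.
have cs : csign (move_start D i) = csign D by [].
move: HinD HoutD HinD' HoutD' Hq1 Hq2.
rewrite /crossing_weight /BL /TL /BR /TR cs.
case: (b) => {hs dp cb_in nr co co' idx0 idx' hiot P2 gi}; case: (csign D c) => /= h1 h2 h3 h4 h5 h6;
  rewrite ?h5 ?h6 ?h1 ?h2 ?h3 ?h4; lia.
Qed.
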